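(* Let $A$ be an algebra over a field $\mathbb{F}$ with more than two elements such that $A_A$ (the algebra viewed as a right module over itself) is automorphism-invariant. Then $A$ is right self-injective.
   Context: Algebras are associative with identity. $E(M)$ denotes the injective hull of a module $M$. A module $M$ is automorphism-invariant if $\sigma(M)\subseteq M$ for every automorphism $\sigma$ of $E(M)$. A ring $A$ is right self-injective if $A_A$ is an injective right $A$-module. *)

(* Defs.v *)
(* Right A-modules are represented as left modules over the
   converse ring A^c (i.e. objects of lmodType A^c): for m : M, a : A^c,
   a *: m stands for the right action m.a. *)
From HB Require Import structures.
From mathcomp Require Import all_boot all_order all_algebra.
Set Implicit Arguments. Unset Strict Implicit. Unset Printing Implicit Defensive.
Import GRing.Theory.
Local Open Scope ring_scope.

Definition is_hom (R : pzRingType) (M N : lmodType R) (f : M -> N) : Prop :=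
  forall (a : R) (x y : M), f (a *: x + y) = a *: f x + f y.

Definition is_submod (R : pzRingType) (M : lmodType R) (S : M -> Prop) : Prop :=
  [/\ S 0, (forall x y, S x -> S y -> S (x + y)) & (forall a x, S x -> S (a *: x))].

Definition injective_module (R : pzRingType) (E : lmodType R) : Prop :=
  forall (M N : lmodType R) (i : M -> N) (f : M -> E),
    is_hom i -> injective i -> is_hom f ->
    exists g : N -> E, is_hom g /\ forall x, g (i x) = f x.

Definition essential_mono (R : pzRingType) (M E : lmodType R) (i : M -> E) : Prop :=
  [/\ is_hom i, injective i &
   forall S : E -> Prop, is_submod S -> (exists e, S e /\ e <> 0) ->
     exists x, S (i x) /\ i x <> 0].

Definition injective_hull (R : pzRingType) (M E : lmodType R) (i : M -> E) : Prop :=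
  injective_module E /\ essential_mono i.

Definition is_automorphism (R : pzRingType) (E : lmodType R) (s : E -> E) : Prop :=
  is_hom s /\ bijective s.

Definition automorphism_invariant (R : pzRingType) (M : lmodType R) : Prop :=
  exists (E : lmodType R) (i : M -> E), injective_hull i /\
    forall s : E -> E, is_automorphism s ->
      forall x : M, exists y : M, s (i x) = i y.

(* The right regular module A_A, as a left A^c-module: a *: x = x * a. *)
Definition regular_right_module (A : pzRingType) : lmodType (A^c) := (A^c)^o.

(* Main.v *)
Require Import Defs.
From HB Require Import structures.
From mathcomp Require Import all_boot all_order all_algebra.
From mathcomp Require Import boolp classical_sets.
Import GRing.Theory.
Local Open Scope ring_scope.
Set Implicit Arguments. Unset Strict Implicit.

Section Basic.
Variables (R : pzRingType) (E : lmodType R).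
Implicit Types (f g s t : E -> E) (x y : E).

Lemma hom0 f : is_hom f -> f 0 = 0.
Proof.
move=> H; have h := H 1 0 0; rewrite !scale1r addr0 in h.
by apply: (addrI (f 0)); rewrite addr0 -h.
Qed.
Lemma homD f x y : is_hom f -> f (x + y) = f x + f y.
Proof. by move=> H; have := H 1 x y; rewrite !scale1r. Qed.
Lemma homZ f a x : is_hom f -> f (a *: x) = a *: f x.
Proof. by move=> H; have := H a x 0; rewrite addr0 (hom0 H) addr0. Qed.
Lemma homN f x : is_hom f -> f (- x) = - f x.
Proof. by move=> H; rewrite -scaleN1r homZ // scaleN1r. Qed.
Lemma homB f x y : is_hom f -> f (x - y) = f x - f y.
Proof. by move=> H; rewrite homD // homN. Qed.

Lemma homI (H : forall x y, True) : True. Proof. by []. Qed.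

Lemma hom_id : is_hom (@id E). Proof. by []. Qed.
Lemma hom_comp f g : is_hom f -> is_hom g -> is_hom (f \o g).
Proof. by move=> hf hg a x y /=; rewrite hg hf. Qed.
Lemma hom_add f g : is_hom f -> is_hom g -> is_hom (fun x => f x + g x).
Proof.
move=> hf hg a x y; rewrite hf hg scalerDr -!addrA; congr (_ + _).
by rewrite addrCA.
Qed.
Lemma hom_opp f : is_hom f -> is_hom (fun x => - f x).
Proof. by move=> hf a x y; rewrite hf opprD scalerN. Qed.
Lemma hom_sub f g : is_hom f -> is_hom g -> is_hom (fun x => f x - g x).
Proof. by move=> hf hg; apply: hom_add => //; apply: hom_opp. Qed.
Lemma hom0f : is_hom (fun _ : E => 0 : E).
Proof. by move=> a x y; rewrite scaler0 addr0. Qed.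
Lemma hom_scal (c : R) : (forall r, c * r = r * c) -> is_hom (fun x : E => c *: x).
Proof. by move=> cc a x y; rewrite scalerDr !scalerA cc. Qed.
Lemma hom_ext f g : (forall x, f x = g x) -> is_hom f -> is_hom g.
Proof. by move=> e hf a x y; rewrite -!e. Qed.

Definition ess (L : E -> Prop) :=
  forall x, x != 0 -> exists a, L (a *: x) /\ a *: x != 0.

Definition Jm f := is_hom f /\ ess (fun x => f x = 0).

Lemma ess_zero L (P : E -> Prop) : ess L -> (forall a x, P x -> P (a *: x)) ->
  (forall x, P x -> L x -> x = 0) -> forall x, P x -> x = 0.
Proof.
move=> eL cP h x Px; apply/eqP/negP => /negP nx.
have [a [La nz]] := eL x nx.
by move: nz; rewrite (h _ (cP _ _ Px) La) eqxx.
Qed.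

Lemma ess_mono L L' : ess L -> (forall x, L x -> L' x) -> ess L'.
Proof. by move=> eL s x nx; have [a [La nz]] := eL x nx; exists a; split=> //; apply: s. Qed.

Lemma ess_agree f g L : is_hom f -> is_hom g -> ess L -> (forall x, L x -> f x = g x) ->
  Jm (fun x => f x - g x).
Proof.
move=> hf hg eL e; split; first exact: hom_sub.
by apply: ess_mono eL _ => x Lx; rewrite e // subrr.
Qed.

Lemma ess_inter L1 L2 : ess L1 -> ess L2 -> (forall a x, L1 x -> L1 (a *: x)) ->
  ess (fun x => L1 x /\ L2 x).
Proof.
move=> e1 e2 c1 x nx; have [a [L1a nz]] := e1 x nx.
have [b [L2b nzb]] := e2 _ nz; exists (b * a); rewrite -scalerA; split => //.
by split => //; apply: c1.
Qed.

Lemma ess_pre L s : is_hom s -> ess L -> (forall x, L x -> forall a, L (a *: x)) ->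
  (L 0) -> ess (fun x => L (s x)).
Proof.
move=> hs eL cL L0 x nx; case: (eqVneq (s x) 0) => sx.
  by exists 1; rewrite scale1r sx; split.
have [a [La nz]] := eL _ sx; exists a; rewrite homZ //; split => //.
by apply: contraNneq nz => h; rewrite -homZ // h hom0.
Qed.

Lemma J_add f g : Jm f -> Jm g -> Jm (fun x => f x + g x).
Proof.
move=> [hf ef] [hg eg]; split; first exact: hom_add.
apply: ess_mono (ess_inter ef eg _) _; first by move=> a x fx; rewrite homZ // fx scaler0.
by move=> x [-> ->]; rewrite addr0.
Qed.
Lemma J_opp f : Jm f -> Jm (fun x => - f x).
Proof.
move=> [hf ef]; split; first exact: hom_opp.
by apply: ess_mono ef _ => x ->; rewrite oppr0.
Qed.
Lemma J_compl f s : Jm f -> is_hom s -> Jm (s \o f).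
Proof.
move=> [hf ef] hs; split; first exact: hom_comp.
by apply: ess_mono ef _ => x /= ->; rewrite hom0.
Qed.
Lemma J_compr f s : Jm f -> is_hom s -> Jm (f \o s).
Proof.
move=> [hf ef] hs; split; first exact: hom_comp.
apply: (@ess_pre (fun x => f x = 0)) => //; last exact: hom0.
by move=> x fx a; rewrite homZ // fx scaler0.
Qed.
Lemma J_ext f g : (forall x, f x = g x) -> Jm f -> Jm g.
Proof.
move=> e [hf ef]; split; first exact: hom_ext hf.
by apply: ess_mono ef _ => x; rewrite e.
Qed.
Lemma J0 : Jm (fun _ => 0).
Proof. by split; [exact: hom0f | move=> x nx; exists 1; rewrite scale1r]. Qed.

End Basic.
Section Sub.
Variables (R : pzRingType) (E : lmodType R) (P : E -> Prop).
Hypothesis sP : is_submod P.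

Definition subT of is_submod P := {x : E | `[< P x >]}.
Local Notation ST := (subT sP).
HB.instance Definition _ := Choice.on ST.
Lemma sP0 : `[< P 0 >]. Proof. by apply/asboolP; case: sP. Qed.
Lemma sPD x y : `[< P x >] -> `[< P y >] -> `[< P (x + y) >].
Proof. by move=> /asboolP hx /asboolP hy; apply/asboolP; case: sP => _ h _; exact: h. Qed.
Lemma sPZ a x : `[< P x >] -> `[< P (a *: x) >].
Proof. by move=> /asboolP hx; apply/asboolP; case: sP => _ _ h; exact: h. Qed.
Lemma sPN x : `[< P x >] -> `[< P (- x) >].
Proof. by move=> h; rewrite -scaleN1r; exact: sPZ. Qed.
Definition sz : ST := exist _ 0 sP0.
Definition sadd (x y : ST) : ST := exist _ (val x + val y) (sPD (valP x) (valP y)).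
Definition sopp (x : ST) : ST := exist _ (- val x) (sPN (valP x)).
Definition sscale a (x : ST) : ST := exist _ (a *: val x) (sPZ a (valP x)).
Lemma saddA : associative sadd. Proof. by move=> x y z; apply: val_inj; rewrite /= addrA. Qed.
Lemma saddC : commutative sadd. Proof. by move=> x y; apply: val_inj; rewrite /= addrC. Qed.
Lemma sadd0 : left_id sz sadd. Proof. by move=> x; apply: val_inj; rewrite /= add0r. Qed.
Lemma saddN : left_inverse sz sopp sadd. Proof. by move=> x; apply: val_inj; rewrite /= addNr. Qed.
HB.instance Definition _ := GRing.isZmodule.Build ST saddA saddC sadd0 saddN.
Lemma sscaleA a b v : sscale a (sscale b v) = sscale (a * b) v.
Proof. by apply: val_inj; rewrite /= scalerA. Qed.
Lemma sscale1 : left_id 1 sscale. Proof. by move=> x; apply: val_inj; rewrite /= scale1r. Qed.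
Lemma sscaleDr : right_distributive sscale +%R. Proof. by move=> a x y; apply: val_inj; rewrite /= scalerDr. Qed.
Lemma sscaleDl v : {morph sscale^~ v : a b / a + b}. Proof. by move=> a b; apply: val_inj; rewrite /= scalerDl. Qed.
HB.instance Definition _ := GRing.Zmodule_isLmodule.Build R ST sscaleA sscale1 sscaleDr sscaleDl.
End Sub.

Lemma ext_on (R : pzRingType) (E : lmodType R) (Einj : injective_module E) (P : E -> Prop)
  (f : E -> E) : is_submod P ->
  (forall a x y, P x -> P y -> f (a *: x + y) = a *: f x + f y) ->
  exists g, is_hom g /\ forall x, P x -> g x = f x.
Proof.
move=> sP hf.
have [|||g [hg eg]] := Einj (subT sP) E val (f \o val).
- by move=> a x y.
- exact: val_inj.
- by move=> a x y /=; apply: hf; [move: (valP x) | move: (valP y)] => /asboolP.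
exists g; split => // x Px.
have Px' : `[< P x >] by apply/asboolP.
by have := eg (exist _ x Px').
Qed.
Section Inj.
Variables (R : pzRingType) (E : lmodType R) (Einj : injective_module E).
Implicit Types (f g s t v w j : E -> E) (x y : E).

Lemma bij_ess_img v : is_hom v -> injective v -> ess (fun y => exists x, y = v x) ->
  bijective v.
Proof.
move=> hv iv ev.
have [||| g [hg eg]] := @Einj E E v id => //.
exists g => // y; set z := y - v (g y).
suff : z = 0 by move/eqP; rewrite subr_eq0 => /eqP.
apply/eqP/negP => /negP nz; have [a [[m em] na]] := ev z nz.
have : g (a *: z) = 0 by rewrite homZ // homB // eg subrr scaler0.
by rewrite em eg => m0; move: na; rewrite em m0 hom0 // eqxx.
Qed.

Lemma J_bij j : Jm j -> bijective (fun x => x + j x).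
Proof.
move=> [hj ej]; have h1 : is_hom (fun x => x + j x) by apply: hom_add.
apply: bij_ess_img => //.
- move=> x x' e.
  have P0 : (x - x') + j (x - x') = 0 by rewrite homB // addrACA -opprD e subrr.
  suff : x - x' = 0 by move/eqP; rewrite subr_eq0 => /eqP.
  apply: (@ess_zero _ _ _ (fun z => z + j z = 0) ej) P0.
    by move=> a z; rewrite homZ // -scalerDr => ->; rewrite scaler0.
  by move=> z zj jz; rewrite jz addr0 in zj.
- move=> y ny; have [a [ja na]] := ej y ny; exists a; split => //.
  by exists (a *: y); rewrite ja addr0.
Qed.

Lemma unit_inv v w j j' : is_hom v -> is_hom w -> Jm j -> Jm j' ->
  (forall x, v (w x) = x + j x) -> (forall x, w (v x) = x + j' x) -> bijective v.
Proof.
move=> hv hw Jj Jj' e1 e2.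
have [k k1 k2] := J_bij Jj; have [k' k1' k2'] := J_bij Jj'.
have vr : cancel (w \o k) v by move=> y /=; rewrite e1; exact: k2.
have lv : cancel v (k' \o w) by move=> x /=; rewrite e2; exact: k1'.
exists (w \o k) => // x.
by rewrite -{2}(lv x) -{2}(vr (v x)) lv.
Qed.
End Inj.
Lemma zorn_pred (T : Type) (P : (T -> Prop) -> Prop) (S0 : T -> Prop) : P S0 ->
  (forall F : (T -> Prop) -> Prop, (forall S, F S -> P S) ->
     (forall S S', F S -> F S' -> (forall x, S x -> S' x) \/ (forall x, S' x -> S x)) ->
     (exists S, F S) -> P (fun x => exists S, F S /\ S x)) ->
  exists A, P A /\ forall B, P B -> (forall x, A x -> B x) -> forall x, B x -> A x.
Proof.
move=> P0 hU.
pose T' := {S : T -> Prop | P S}.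
pose Rl (s t : T') := `[< forall x, sval s x -> sval t x >].
have [|||| t tmax] := @Zorn T' Rl.
- by move=> s; apply/asboolP.
- by move=> r s t /asboolP h1 /asboolP h2; apply/asboolP => x /h1 /h2.
- move=> [s ps] [t pt] /asboolP h1 /asboolP h2; apply: eq_exist => /=.
  by apply: funext => x; apply: propext; split; [apply: h1 | apply: h2].
- move=> A Atot.
  case: (pselect (exists s, A s)) => [[s0 As0] | nA].
  + pose F := fun S => exists s, A s /\ sval s = S.
    have PF : P (fun x => exists S, F S /\ S x).
      apply: hU.
      * by move=> S [s [_ <-]]; apply: (svalP s).
      * move=> S S' [s [As <-]] [s' [As' <-]].
        by case: (Atot s s' As As') => /asboolP h; [left | right].
      * by exists (sval s0), s0.
    exists (exist _ _ PF) => s As; apply/asboolP => x sx /=.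
    by exists (sval s); split => //; exists s.
  + exists (exist _ S0 P0) => s As; exfalso; apply: nA; by exists s.
- exists (sval t); split; first exact: svalP.
  move=> B PB AB x Bx.
  have e := tmax (exist _ B PB) (introT (asboolP _) AB).
  by rewrite -e.
Qed.
Section Mods.
Variables (R : pzRingType) (E : lmodType R).
Implicit Types (A B C N : E -> Prop) (x y v : E).

Definition sumP A B v := exists a b, [/\ A a, B b & v = a + b].
Definition indep A B := forall v, A v -> B v -> v = 0.
Definition cyc x v := exists a, v = a *: x.

Lemma s0 A : is_submod A -> A 0. Proof. by case. Qed.
Lemma sD A x y : is_submod A -> A x -> A y -> A (x + y). Proof. by case=> _ h _; apply: h. Qed.
Lemma sZ A a x : is_submod A -> A x -> A (a *: x). Proof. by case=> _ _ h; apply: h. Qed.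
Lemma sN A x : is_submod A -> A x -> A (- x).
Proof. by move=> h hx; rewrite -scaleN1r; apply: sZ. Qed.
Lemma sB A x y : is_submod A -> A x -> A y -> A (x - y).
Proof. by move=> h hx hy; apply: sD => //; apply: sN. Qed.

Lemma sub_sum A B : is_submod A -> is_submod B -> is_submod (sumP A B).
Proof.
move=> hA hB; split.
- by exists 0, 0; rewrite addr0; split => //; apply: s0.
- move=> _ _ [a [b [Aa Bb ->]]] [a' [b' [Aa' Bb' ->]]].
  by exists (a + a'), (b + b'); split; [apply: sD | apply: sD | rewrite addrACA].
- move=> k _ [a [b [Aa Bb ->]]].
  by exists (k *: a), (k *: b); split; [apply: sZ | apply: sZ | rewrite scalerDr].
Qed.

Lemma sub_cyc x : is_submod (cyc x).
Proof.
split; first by exists 0; rewrite scale0r.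
- by move=> _ _ [a ->] [b ->]; exists (a + b); rewrite scalerDl.
- by move=> k _ [a ->]; exists (k * a); rewrite scalerA.
Qed.

Lemma sum_l A B x : is_submod B -> A x -> sumP A B x.
Proof. by move=> hB Ax; exists x, 0; split => //; [apply: s0 | rewrite addr0]. Qed.
Lemma sum_r A B x : is_submod A -> B x -> sumP A B x.
Proof. by move=> hA Bx; exists 0, x; split => //; [apply: s0 | rewrite add0r]. Qed.

Lemma indep_uniq A B a a' b b' : is_submod A -> is_submod B -> indep A B ->
  A a -> A a' -> B b -> B b' -> a + b = a' + b' -> a = a' /\ b = b'.
Proof.
move=> hA hB iAB Aa Aa' Bb Bb' e.
have h : a - a' = b' - b.
  by rewrite -[a](addrK b) e [a' + b']addrC addrAC addrK.
have z : a - a' = 0 by apply: iAB; [apply: sB | rewrite h; apply: sB].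
split; first by apply/eqP; rewrite -subr_eq0 z.
by apply/eqP; rewrite eq_sym -subr_eq0 -h z.
Qed.

Lemma proj_ex (Einj : injective_module E) A B : is_submod A -> is_submod B -> indep A B ->
  exists p, is_hom p /\ forall a b, A a -> B b -> p (a + b) = a.
Proof.
move=> hA hB iAB.
pose f v := xget 0 (fun a => A a /\ exists b, B b /\ v = a + b).
have fv : forall a b, A a -> B b -> f (a + b) = a.
  move=> a b Aa Bb; apply: xget_unique; first by split => //; exists b.
  move=> a' [Aa' [b' [Bb' e]]].
  by have [] := indep_uniq hA hB iAB Aa' Aa Bb' Bb (esym e).
have [|g [hg eg]] := @ext_on _ _ Einj (sumP A B) f (sub_sum hA hB).
  move=> k _ _ [a [b [Aa Bb ->]]] [a' [b' [Aa' Bb' ->]]].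
  have -> : k *: (a + b) + (a' + b') = (k *: a + a') + (k *: b + b').
    by rewrite scalerDr addrACA.
  by rewrite !fv //; [apply: sD => //; apply: sZ | apply: sD => //; apply: sZ].
exists g; split => // a b Aa Bb; rewrite eg ?fv //.
by exists a, b.
Qed.
Lemma comp_ex N B : is_submod N -> is_submod B ->
  exists C, [/\ is_submod C, (forall v, C v -> B v), indep C N &
    forall z, B z -> z != 0 -> exists b, sumP N C (b *: z) /\ b *: z != 0].
Proof.
move=> hN hB.
pose P C := [/\ is_submod C, (forall v, C v -> B v) & indep C N].
have P0 : P (fun v => v = 0).
  split.
  - split => //; first by move=> x y -> ->; rewrite addr0.
    by move=> a x ->; rewrite scaler0.
  - by move=> v ->; apply: s0.
  - by move=> v ->.
have [|C [[hC CB iC] Cmax]] := @zorn_pred E P _ P0.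
  move=> F FP Ftot [S0 FS0]; split.
  - split.
    + by exists S0; split => //; have [h _ _] := FP _ FS0; apply: s0.
    + move=> x y [S [FS Sx]] [S' [FS' Sy]].
      case: (Ftot S S' FS FS') => h.
      * exists S'; split => //; have [hS' _ _] := FP _ FS'; apply: sD => //; exact: h.
      * exists S; split => //; have [hS _ _] := FP _ FS; apply: sD => //; exact: h.
    + move=> a x [S [FS Sx]]; exists S; split => //.
      by have [hS _ _] := FP _ FS; apply: sZ.
  - by move=> v [S [FS Sv]]; have [_ h _] := FP _ FS; apply: h.
  - by move=> v [S [FS Sv]]; have [_ _ h] := FP _ FS; apply: h.
exists C; split => // z Bz nz.
apply: contrapT => hno.
have hno' : forall b, sumP N C (b *: z) -> b *: z = 0.
  move=> b hs; apply/eqP; apply: contrapT => /negP nb; apply: hno; by exists b.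
pose C' := sumP C (cyc z).
have PC' : P C'.
  split; first by apply: sub_sum => //; apply: sub_cyc.
  - move=> _ [c [_ [Cc [b ->] ->]]]; apply: sD => //; first exact: CB.
    exact: sZ.
  - move=> _ [c [_ [Cc [b ->] ->]]] Nv.
    have bz : b *: z = 0.
      apply: hno'; exists (c + b *: z), (- c); split => //; first exact: sN.
      by rewrite addrC addKr.
    by rewrite bz addr0; apply: iC => //; rewrite bz addr0 in Nv.
have zC : C z.
  apply: (Cmax C' PC'); first by move=> v Cv; apply: sum_l => //; apply: sub_cyc.
  by exists 0, z; split; [apply: s0 | exists 1; rewrite scale1r | rewrite add0r].
move: nz; rewrite -[z]scale1r hno' ?eqxx //.
by apply: sum_r; rewrite ?scale1r.
Qed.
Lemma indep_nz A B a b : is_submod A -> indep A B -> A a -> B b -> b != 0 -> a + b != 0.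
Proof.
move=> hA iAB Aa Bb nb; apply/eqP => e; move/eqP: nb; apply.
apply: iAB => //; have -> : b = - a by apply/eqP; rewrite -addr_eq0 addrC e.
exact: sN.
Qed.

Lemma indep_sym A B : indep A B -> indep B A.
Proof. by move=> h v Bv Av; apply: h. Qed.

Definition sqfree (Z : E -> Prop) := forall (Q : E -> Prop) (h : E -> E),
  is_submod Q -> is_hom h -> (forall q, Q q -> Z q) -> (forall q, Q q -> Z (h q)) ->
  (forall q, Q q -> h q = 0 -> q = 0) ->
  (forall q q', Q q -> Q q' -> q = h q' -> q = 0) -> forall q, Q q -> q = 0.

Lemma inj_of_ker (f : E -> E) : is_hom f -> (forall x, f x = 0 -> x = 0) -> injective f.
Proof.
move=> hf k x y e; apply/eqP; rewrite -subr_eq0; apply/eqP; apply: k.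
by rewrite homB // e subrr.
Qed.
End Mods.
Section Graph.
Variables (R : pzRingType) (E : lmodType R).
Implicit Types (S : E * E -> Prop) (x y v : E).

Definition goodG S :=
  [/\ S (0, 0), (forall x y x' y', S (x, y) -> S (x', y') -> S (x + x', y + y')),
      (forall a x y, S (x, y) -> S (a *: x, a *: y)),
      (forall y, S (0, y) -> y = 0) &
      ((forall x, S (x, 0) -> x = 0) /\ (forall v x y, S (v, y) -> S (x, v) -> v = 0))].

Definition domG S v := exists y, S (v, y).
Definition ranG S v := exists x, S (x, v).

Lemma graph_max : exists S, goodG S /\
  forall S', goodG S' -> (forall p, S p -> S' p) -> forall p, S' p -> S p.
Proof.
have P0 : goodG (fun p => p = (0, 0)).
  split => //.
  - by move=> x y x' y' [-> ->] [-> ->]; rewrite !addr0.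
  - by move=> a x y [-> ->]; rewrite !scaler0.
  - by move=> y [].
  - by split; [move=> x [] | move=> v x y []].
have [|S [gS Smax]] := @zorn_pred (E * E)%type goodG _ P0.
  move=> F FP Ftot [S0 FS0].
  have two : forall p q, (exists S, F S /\ S p) -> (exists S, F S /\ S q) ->
      exists S, [/\ F S, S p & S q].
    move=> p q [S [FS Sp]] [S' [FS' Sq]].
    case: (Ftot S S' FS FS') => h; first by exists S'; split => //; apply: h.
    by exists S; split => //; apply: h.
  split.
  - by exists S0; split => //; case: (FP _ FS0).
  - move=> x y x' y' h1 h2; have [S [FS Sp Sq]] := two _ _ h1 h2.
    by exists S; split => //; case: (FP _ FS) => _ h _ _ _; apply: h.
  - move=> a x y [S [FS Sp]]; exists S; split => //.
    by case: (FP _ FS) => _ _ h _ _; apply: h.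
  - by move=> y [S [FS Sp]]; case: (FP _ FS) => _ _ _ h _; apply: h.
  split.
  - by move=> x [S [FS Sp]]; case: (FP _ FS) => _ _ _ _ [h _]; apply: h.
  - move=> v x y h1 h2; have [S [FS Sp Sq]] := two _ _ h1 h2.
    by case: (FP _ FS) => _ _ _ _ [_ h]; exact: (h _ _ _ Sp Sq).
by exists S; split => // S' gS' SS' p; apply: Smax.
Qed.

Lemma dom_sub S : goodG S -> is_submod (domG S).
Proof.
move=> [h0 hD hZ _ _]; split; first by exists 0.
- by move=> x x' [y Sy] [y' Sy']; exists (y + y'); apply: hD.
- by move=> a x [y Sy]; exists (a *: y); apply: hZ.
Qed.
Lemma ran_sub S : goodG S -> is_submod (ranG S).
Proof.
move=> [h0 hD hZ _ _]; split; first by exists 0.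
- by move=> y y' [x Sx] [x' Sx']; exists (x + x'); apply: hD.
- by move=> a y [x Sx]; exists (a *: x); apply: hZ.
Qed.
Lemma dom_ran S : goodG S -> indep (domG S) (ranG S).
Proof. by move=> [_ _ _ _ [_ h]] v [y Sy] [x Sx]; exact: (h _ _ _ Sy Sx). Qed.

Lemma graph_fun S x y y' : goodG S -> S (x, y) -> S (x, y') -> y = y'.
Proof.
move=> [h0 hD hZ hf _] s1 s2.
have : S (x + (-1) *: x, y + (-1) *: y') by apply: hD => //; apply: hZ.
rewrite !scaleN1r subrr => /hf /eqP; rewrite subr_eq0 => /eqP.
by [].
Qed.
Lemma graph_inj S x x' y : goodG S -> S (x, y) -> S (x', y) -> x = x'.
Proof.
move=> [h0 hD hZ _ [hi _]] s1 s2.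
have : S (x + (-1) *: x', y + (-1) *: y) by apply: hD => //; apply: hZ.
rewrite !scaleN1r subrr => /hi /eqP; rewrite subr_eq0 => /eqP.
by [].
Qed.

Lemma graph_sqfree S Z : goodG S ->
  (forall S', goodG S' -> (forall p, S p -> S' p) -> forall p, S' p -> S p) ->
  is_submod Z -> indep Z (sumP (domG S) (ranG S)) -> sqfree Z.
Proof.
move=> gS Smax hZ iZN Q h hQ hh QZ hQZ hinj hint q Qq.
have hX := dom_sub gS; have hY := ran_sub gS; have hN := sub_sum hX hY.
have iNZ : indep (sumP (domG S) (ranG S)) Z by apply: indep_sym.
have [g0 gD gZ gf [gi gdr]] := gS.
pose S' := fun p : E * E => exists x y q, [/\ S (x, y), Q q & p = (x + q, y + h q)].
have XN : forall x, domG S x -> sumP (domG S) (ranG S) x by move=> x hx; apply: sum_l.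
have YN : forall y, ranG S y -> sumP (domG S) (ranG S) y by move=> y hy; apply: sum_r.
have gS' : goodG S'.
  split.
  - by exists 0, 0, 0; split => //; [apply: s0 | rewrite (hom0 hh) !addr0].
  - move=> _ _ _ _ [x [y [r [Sxy Qq' [-> ->]]]]] [x' [y' [r' [Sxy' Qq'' [-> ->]]]]].
    exists (x + x'), (y + y'), (r + r'); split; [exact: gD | exact: sD |].
    by rewrite (homD _ _ hh); congr (_, _); apply: addrACA.
  - move=> a _ _ [x [y [r [Sxy Qq' [-> ->]]]]].
    exists (a *: x), (a *: y), (a *: r); split; [exact: gZ | exact: sZ |].
    by rewrite (homZ _ _ hh) !scalerDr.
  - move=> _ [x [y [r [Sxy Qq' [e0 ->]]]]].
    have [x0 r0] := indep_uniq hN hZ iNZ (XN x (ex_intro _ y Sxy)) (s0 hN) (QZ _ Qq') (s0 hZ)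
       (etrans (esym e0) (esym (addr0 0))).
    subst; rewrite (hom0 hh) addr0; exact: gf.
  split.
  - move=> _ [x [y [r [Sxy Qq' [-> e0]]]]].
    have [y0 hq0] := indep_uniq hN hZ iNZ (YN y (ex_intro _ x Sxy)) (s0 hN) (hQZ _ Qq') (s0 hZ)
       (etrans (esym e0) (esym (addr0 0))).
    subst; have r0 := hinj r Qq' hq0; subst; rewrite addr0; exact: gi.
  - move=> _ _ _ [x [y [r [Sxy Qq' [-> _]]]]] [x2 [y2 [r2 [Sxy2 Qq2 [_ e2]]]]].
    have [ex eq] := indep_uniq hN hZ iNZ (XN x (ex_intro _ y Sxy)) (YN y2 (ex_intro _ x2 Sxy2))
       (QZ _ Qq') (hQZ _ Qq2) e2.
    have x0 : x = 0 by apply: (gdr x x2 y Sxy); rewrite ex.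
    have r0 : r = 0 by apply: (hint r r2).
    by rewrite x0 r0 addr0.
have SS' : forall p, S p -> S' p.
  by case=> x y Sxy; exists x, y, 0; split => //; [apply: s0 | rewrite (hom0 hh) !addr0].
have Sq : S (q, h q).
  by apply: (Smax S' gS' SS' (q, h q)); exists 0, 0, q; split => //; rewrite !add0r.
by apply: iZN; [apply: QZ | apply: XN; exists (h q)].
Qed.
End Graph.
Section TT.
Variables (R : pzRingType) (E : lmodType R) (Einj : injective_module E).
Variables (M : E -> Prop) (sM : is_submod M).
Hypothesis Minv : forall s, is_hom s -> bijective s -> forall m, M m -> M (s m).
Variables (lc ld le : R).
Hypotheses (cc : forall r, lc * r = r * lc) (dc : forall r, ld * r = r * ld)
  (ec : forall r, le * r = r * le) (cd : lc * ld = 1) (ce : (1 - lc) * le = 1).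
Implicit Types (f g s t v w j p : E -> E) (x y : E).

Definition Tm f := is_hom f /\ forall m, M m -> M (f m).
Definition eqJ f g := Jm (fun x => f x - g x).

Lemma M0 : M 0. Proof. by case: sM. Qed.
Lemma MD x y : M x -> M y -> M (x + y). Proof. by case: sM => _ h _; apply: h. Qed.
Lemma MZ a x : M x -> M (a *: x). Proof. by case: sM => _ _ h; apply: h. Qed.
Lemma MN x : M x -> M (- x). Proof. by move=> h; rewrite -scaleN1r; apply: MZ. Qed.
Lemma MB x y : M x -> M y -> M (x - y). Proof. by move=> h h'; apply: MD => //; apply: MN. Qed.

Lemma T_unit s : is_hom s -> bijective s -> Tm s.
Proof. by move=> hs bs; split => //; apply: Minv. Qed.
Lemma T_add f g : Tm f -> Tm g -> Tm (fun x => f x + g x).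
Proof. by move=> [hf Mf] [hg Mg]; split; [apply: hom_add | move=> m Mm; apply: MD; auto]. Qed.
Lemma T_opp f : Tm f -> Tm (fun x => - f x).
Proof. by move=> [hf Mf]; split; [apply: hom_opp | move=> m Mm; apply: MN; auto]. Qed.
Lemma T_sub f g : Tm f -> Tm g -> Tm (fun x => f x - g x).
Proof. by move=> tf tg; apply: T_add => //; apply: T_opp. Qed.
Lemma T_comp f g : Tm f -> Tm g -> Tm (f \o g).
Proof. by move=> [hf Mf] [hg Mg]; split; [apply: hom_comp | move=> m Mm /=; auto]. Qed.
Lemma T_scal (a : R) f : (forall r, a * r = r * a) -> Tm f -> Tm (fun x => a *: f x).
Proof.
move=> ac [hf Mf]; split; last by move=> m Mm; apply: MZ; auto.
exact: (hom_comp (hom_scal ac) hf).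
Qed.
Lemma T_id : Tm id. Proof. by split. Qed.
Lemma T_ext f g : (forall x, f x = g x) -> Tm f -> Tm g.
Proof. by move=> ex [hf Mf]; split; [apply: hom_ext hf | move=> m Mm; rewrite -ex; auto]. Qed.

Lemma T_J j : Jm j -> Tm j.
Proof.
move=> Jj; have [hj _] := Jj.
have t1 : Tm (fun x => x + j x) by apply: T_unit; [apply: hom_add | apply: J_bij].
by apply: T_ext (T_sub t1 T_id) => x /=; rewrite addrC addKr.
Qed.

Lemma T_eqJ f g : Tm g -> is_hom f -> eqJ f g -> Tm f.
Proof.
move=> tg hf Jfg; apply: T_ext (T_add tg (T_J Jfg)) => x.
by rewrite addrC subrK.
Qed.

Lemma eqJ_refl f : is_hom f -> eqJ f f.
Proof. by rewrite /eqJ => hf; apply: (@J_ext _ _ (fun _ => 0)) => [x|]; [rewrite subrr | exact: J0]. Qed.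
Lemma eqJ_sym f g : eqJ f g -> eqJ g f.
Proof. by rewrite /eqJ => h; apply: J_ext (J_opp h) => x; rewrite opprB. Qed.
Lemma eqJ_trans f g h : eqJ f g -> eqJ g h -> eqJ f h.
Proof. by rewrite /eqJ => h1 h2; apply: J_ext (J_add h1 h2) => x; rewrite addrA subrK. Qed.
Lemma eqJ_add f g f' g' : eqJ f f' -> eqJ g g' ->
  eqJ (fun x => f x + g x) (fun x => f' x + g' x).
Proof. by rewrite /eqJ => h1 h2; apply: J_ext (J_add h1 h2) => x; rewrite opprD addrACA. Qed.
Lemma eqJ_comp s s' t t' : is_hom s -> is_hom s' -> is_hom t -> is_hom t' ->
  eqJ s s' -> eqJ t t' -> eqJ (s \o t) (s' \o t').
Proof.
rewrite /eqJ => hs hs' ht ht' h1 h2.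
apply: J_ext (J_add (J_compl h2 hs) (J_compr h1 ht')) => x /=.
by rewrite (homB _ _ hs) addrA subrK.
Qed.
Lemma eqJ_ext f g f' g' : (forall x, f x = f' x) -> (forall x, g x = g' x) ->
  eqJ f g -> eqJ f' g'.
Proof. by rewrite /eqJ => e1 e2; apply: J_ext => x; rewrite e1 e2. Qed.

Lemma T_nil f : is_hom f -> Jm (f \o f) -> Tm f.
Proof.
move=> hf Jff.
have h1 : is_hom (fun x => x + f x) by apply: hom_add.
have h2 : is_hom (fun x => x - f x) by apply: hom_sub.
have u : Tm (fun x => x + f x).
  apply: T_unit => //; apply: (@unit_inv _ _ _ _ (fun x => x - f x)
     (fun x => - f (f x)) (fun x => - f (f x))) => //; try exact: J_opp.
  - by move=> x; rewrite (homB _ _ hf) addrA subrK.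
  - by move=> x; rewrite (homD _ _ hf) opprD addrA addrK.
by apply: T_ext (T_sub u T_id) => x /=; rewrite addrC addKr.
Qed.

Lemma T_offdiag f g s : is_hom f -> is_hom g -> is_hom s -> Jm (g \o f) ->
  Tm (f \o s \o g).
Proof.
move=> hf hg hs J1; apply: T_nil; first by do 2 apply: hom_comp.
have := J_compr (J_compl J1 (hom_comp hf hs)) (hom_comp hs hg).
by apply: J_ext.
Qed.

Definition central (a : R) := forall r, a * r = r * a.
Lemma central1 : central 1. Proof. by move=> r; rewrite mul1r mulr1. Qed.
Lemma centralB a b : central a -> central b -> central (a - b).
Proof. by move=> ha hb r; rewrite mulrBl mulrBr ha hb. Qed.
Lemma centralM a b : central a -> central b -> central (a * b).
Proof. by move=> ha hb r; rewrite -mulrA hb mulrA ha mulrA. Qed.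

Lemma qidem_calc p a b : is_hom p -> central a -> central b -> a * b = 1 -> forall x,
  let v := fun x => a *: x + (1 - a) *: p x in
  let w := fun x => b *: x + (1 - b) *: p x in
  v (w x) = x + ((1 - a) * (1 - b)) *: (p (p x) - p x).
Proof.
move=> hp ha hb ab x v w; rewrite /v /w.
rewrite (homD _ _ hp) !(homZ _ _ hp) !scalerDr !scalerA ab scale1r.
have key : a * (1 - b) + (1 - a) * b = - ((1 - a) * (1 - b)).
  rewrite !mulrBr !mulrBl !mulr1 !mul1r ab opprB.
  by rewrite opprB addrC.
rewrite -!addrA; congr (_ + _).
by rewrite addrA -scalerDl key scaleNr scalerN addrC.
Qed.

Lemma T_qidem p : is_hom p -> Jm (fun x => p (p x) - p x) -> Tm p.
Proof.
move=> hp Jp.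
have c1 : central (1 - lc) by apply: centralB => //; apply: central1.
have d1 : central (1 - ld) by apply: centralB => //; apply: central1.
have dc' : ld * lc = 1 by rewrite -cc.
have hv : forall a, central a -> central (1 - a) -> is_hom (fun x => a *: x + (1 - a) *: p x).
  move=> a ha ha1; apply: hom_add; first exact: hom_scal.
  exact: (hom_comp (hom_scal ha1) hp).
have Jr : forall r, central r -> Jm (fun x => r *: (p (p x) - p x)).
  by move=> r hr; apply: (J_compl Jp (hom_scal hr)).
have tv : Tm (fun x => lc *: x + (1 - lc) *: p x).
  apply: T_unit; first exact: hv.
  apply: (@unit_inv _ _ Einj _ (fun x => ld *: x + (1 - ld) *: p x)
       (fun x => ((1 - lc) * (1 - ld)) *: (p (p x) - p x))
       (fun x => ((1 - ld) * (1 - lc)) *: (p (p x) - p x))).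
  - exact: hv.
  - exact: hv.
  - by apply: Jr; apply: centralM.
  - by apply: Jr; apply: centralM.
  - by move=> x; apply: qidem_calc.
  - by move=> x; apply: qidem_calc.
have t2 := T_scal ec (T_sub tv (T_scal cc T_id)).
apply: T_ext t2 => x /=; rewrite addrAC subrr add0r scalerA ec ce scale1r.
by [].
Qed.

Lemma sqfree_T N Z pZ : is_submod N -> is_submod Z -> indep N Z -> ess (sumP N Z) ->
  is_hom pZ -> (forall n z, N n -> Z z -> pZ (n + z) = z) -> sqfree Z ->
  forall w, is_hom w -> Tm (pZ \o w \o pZ).
Proof.
move=> hN hZ iNZ eL hpZ epZ sq w hw.
set t := pZ \o w \o pZ.
have ht : is_hom t by do 2 apply: hom_comp.
have pZn : forall n, N n -> pZ n = 0.
  by move=> n Nn; rewrite -[n]addr0 epZ //; apply: s0.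
have pZz : forall z, Z z -> pZ z = z.
  by move=> z Zz; rewrite -{1}[z]add0r epZ //; apply: s0.
pose K := fun z => Z z /\ t z = 0.
have hK : is_submod K.
  split.
  - by split; [apply: s0 | rewrite hom0].
  - by move=> x y [Zx tx] [Zy ty]; split; [apply: sD | rewrite homD // tx ty addr0].
  - by move=> a x [Zx tx]; split; [apply: sZ | rewrite homZ // tx scaler0].
have [C [hC CZ iCK cess]] := comp_ex hK hZ.
pose L := sumP N Z.
have hL : is_submod L by apply: sub_sum.
pose C1 := fun c => C c /\ L (w c).
have hC1 : is_submod C1.
  split.
  - by split; [apply: s0 | rewrite hom0 //; apply: s0].
  - by move=> x y [Cx Lx] [Cy Ly]; split; [apply: sD | rewrite homD //; apply: sD].
  - by move=> a x [Cx Lx]; split; [apply: sZ | rewrite homZ //; apply: sZ].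
have tC : forall c, C1 c -> Z (t c).
  move=> c [Cc [n [z [Nn Zz ewc]]]].
  by rewrite /t /= (pZz c (CZ _ Cc)) ewc epZ.
have tinj : forall c, C1 c -> t c = 0 -> c = 0.
  move=> c [Cc _] tc; apply: iCK => //; split => //; exact: CZ.
have KtC : forall c, C1 c -> K (t c) -> t c = 0.
  move=> c C1c Ktc.
  suff -> : c = 0 by rewrite hom0.
  apply: (sq (fun c => C1 c /\ K (t c)) t) => //.
  - split.
    + by split; [apply: s0 | rewrite hom0 //; apply: s0].
    + by move=> x y [C1x Kx] [C1y Ky]; split; [apply: sD | rewrite homD //; apply: sD].
    + by move=> a x [C1x Kx]; split; [apply: sZ | rewrite homZ //; apply: sZ].
  - by move=> q [[Cq _] _]; apply: CZ.
  - by move=> q [_ [Zq _]].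
  - by move=> q [C1q _]; apply: tinj.
  - by move=> q q' [[Cq _] _] [_ Kq'] eq; apply: iCK => //; rewrite eq.
pose L1 := sumP N (sumP K C1).
have hL1 : is_submod L1 by apply: sub_sum => //; apply: sub_sum.
have iKC : indep K C by apply: indep_sym.
have eL1 : ess L1.
  move=> v nv; have [a [[n [z [Nn Zz eav]]] nav]] := eL v nv.
  case: (eqVneq z 0) => [z0 | nz].
    exists a; split => //; rewrite eav z0 addr0; apply: sum_l => //.
    exact: sub_sum.
  have [b [[k [c [Kk Cc ebz]]] nbz]] := cess z Zz nz.
  have nz1 : b *: n + b *: z != 0 by apply: (indep_nz hN iNZ (sZ b hN Nn) (sZ b hZ Zz) nbz).
  case: (eqVneq (w c) 0) => [wc0 | nwc].
    exists (b * a); rewrite -scalerA eav scalerDr; split => //.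
    exists (b *: n), (k + c); split; first exact: sZ.
    + by exists k, c; split => //; split => //; rewrite wc0; apply: s0.
    + by rewrite ebz.
  have [b' [Lb' nb']] := eL (w c) nwc.
  have C1c' : C1 (b' *: c) by split; [apply: sZ | rewrite homZ].
  have nc' : b' *: c != 0.
    by apply: contraNneq nb' => h; rewrite -homZ // h hom0.
  exists (b' * (b * a)); rewrite -!scalerA eav scalerDr ebz scalerDr scalerDr.
  split.
  - exists (b' *: (b *: n)), (b' *: k + b' *: c); split; first exact: (sZ b' hN (sZ b hN Nn)).
    + by exists (b' *: k), (b' *: c); split => //; exact: (sZ b' hK Kk).
    + by [].
  - apply: (indep_nz hN iNZ); first exact: (sZ b' hN (sZ b hN Nn)).
      by apply: sD => //; [apply: (sZ b' hZ); case: Kk | apply: (sZ b' hZ); apply: CZ].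
    by apply: (indep_nz hK iKC); [exact: (sZ b' hK Kk) | exact: (sZ b' hC Cc) | exact: nc'].
have iC1NK : indep C1 (sumP N K).
  move=> v [Cv _] [n [k [Nn Kk ev]]].
  have n0 : n = 0.
    apply: iNZ => //; have -> : n = v - k by rewrite ev addrK.
    by apply: sB => //; [apply: CZ | case: Kk].
  by apply: iCK => //; rewrite ev n0 add0r.
have [rho [hrho erho]] := proj_ex Einj hC1 (sub_sum hN hK) iC1NK.
have rhoL1 : forall n k c, N n -> K k -> C1 c -> rho (n + (k + c)) = c.
  move=> n k c Nn Kk C1c; rewrite (addrC k) addrCA erho //.
  by exists n, k.
have rhoc : forall c, C1 c -> rho c = c.
  by move=> c C1c; have := rhoL1 0 0 c (s0 hN) (s0 hK) C1c; rewrite !add0r.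
pose psi := fun x => x + (t (rho x) - rho x).
have hpsi : is_hom psi.
  by apply: hom_add => //; apply: hom_sub => //; apply: hom_comp.
have psiL1 : forall n k c, N n -> K k -> C1 c -> psi (n + (k + c)) = n + (k + t c).
  move=> n k c Nn Kk C1c; rewrite /psi rhoL1 //.
  by rewrite -addrA -addrA (addrC c) subrK.
have psiZ : forall k c, K k -> C1 c -> psi (k + c) = k + t c.
  by move=> k c Kk C1c; have := psiL1 0 k c (s0 hN) Kk C1c; rewrite !add0r.
have psi_ker : forall x, psi x = 0 -> x = 0.
  apply: (@ess_zero _ _ _ (fun x => psi x = 0) eL1).
    by move=> a x px; rewrite homZ // px scaler0.
  move=> x px [n [y [Nn [k [c [Kk C1c ey]]] ex]]]; subst x y.
  rewrite psiL1 // in px.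
  have Zs : Z (k + t c) by apply: sD => //; [case: Kk | apply: tC].
  have [n0 s0'] := indep_uniq hN hZ iNZ Nn (s0 hN) Zs (s0 hZ) (etrans px (esym (addr0 0))).
  have Ktc : K (t c).
    have -> : t c = - k by apply/eqP; rewrite -addr_eq0 addrC s0'.
    exact: sN.
  have tc0 := KtC c C1c Ktc.
  have c0 := tinj c C1c tc0.
  by rewrite n0 c0 addr0 add0r; rewrite tc0 addr0 in s0'.
have psi_inj := inj_of_ker hpsi psi_ker.
have eimg : ess (fun y => exists x, y = psi x).
  move=> v nv; apply: contrapT => hno.
  have hno' : forall a n k c, N n -> K k -> C1 c -> a *: v = n + (k + t c) -> a *: v = 0.
    move=> a n k c Nn Kk C1c eav; apply/eqP; apply: contrapT => /negP na; apply: hno.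
    by exists a; split => //; exists (n + (k + c)); rewrite psiL1.
  pose Q := fun q => exists a n k c, [/\ N n, K k, C1 c, a *: v = n + (k + c) & q = k + c].
  have hQ : is_submod Q.
    split.
    - exists 0, 0, 0, 0; split; try apply: s0 => //; by rewrite ?scale0r !addr0.
    - move=> _ _ [a [n [k [c [Nn Kk Cc eav ->]]]]] [a' [n' [k' [c' [Nn' Kk' Cc' eav' ->]]]]].
      exists (a + a'), (n + n'), (k + k'), (c + c'); split; [apply: sD | apply: sD | apply: sD | | ] => //.
        rewrite scalerDl eav eav' addrACA; congr (_ + _); exact: addrACA.
      by rewrite addrACA.
    - move=> b _ [a [n [k [c [Nn Kk Cc eav ->]]]]].
      exists (b * a), (b *: n), (b *: k), (b *: c); split; [apply: sZ | apply: sZ | apply: sZ | | ] => //.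
        by rewrite -scalerA eav !scalerDr.
      by rewrite scalerDr.
  have Q0 : forall q, Q q -> q = 0.
    apply: (sq Q psi) => //.
    - move=> _ [a [n [k [c [_ Kk [Cc _] _ ->]]]]].
      by apply: sD => //; [case: Kk | apply: CZ].
    - move=> _ [a [n [k [c [_ Kk C1c _ ->]]]]].
      by rewrite psiZ //; apply: sD => //; [case: Kk | apply: tC].
    - by move=> q _; apply: psi_ker.
    - move=> _ _ [a [n [k [c [Nn Kk C1c eav ->]]]]] [a' [n' [k' [c' [Nn' Kk' C1c' eav' ->]]]]] eq.
      rewrite psiZ // in eq.
      have av0 : a *: v = 0 by apply: (hno' a n k' c') => //; rewrite eav eq.
      have Zs : Z (k + c) by apply: sD => //; [case: Kk | apply: CZ; case: C1c].
      have e0 : n + (k + c) = 0 + 0 by rewrite -eav av0 addr0.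
      by have [_ ->] := indep_uniq hN hZ iNZ Nn (s0 hN) Zs (s0 hZ) e0.
  have [a [[n [_ [Nn [k [c [Kk C1c ->]]] eav]]] na]] := eL1 v nv.
  have q0 : k + c = 0 by apply: Q0; exists a, n, k, c; split.
  have av0 : a *: v = 0.
    apply: (hno' a n 0 0) => //; [exact: s0 | exact: s0 |].
    by rewrite eav q0 (hom0 ht) ?addr0 ?add0r.
  by move: na; rewrite av0 eqxx.
have bpsi : bijective psi := bij_ess_img Einj hpsi psi_inj eimg.
have Tpsi : Tm psi := T_unit hpsi bpsi.
have Trho : Tm rho.
  apply: T_qidem => //.
  apply: (@ess_agree _ _ (rho \o rho) rho L1) => //; first exact: hom_comp.
  move=> _ [n [_ [Nn [k [c [Kk C1c ->]]] ->]]].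
  by rewrite /= rhoL1 // rhoc.
apply: (T_eqJ (T_comp Tpsi Trho) ht).
apply: (ess_agree ht (hom_comp hpsi hrho) eL1).
move=> _ [n [_ [Nn [k [c [Kk C1c ->]]] ->]]].
rewrite /= rhoL1 // /psi rhoc // [RHS]addrC subrK.
rewrite !(homD _ _ ht).
have -> : t n = 0 by rewrite /t /= (pZn n Nn) (hom0 hw) (hom0 hpZ).
by case: Kk => _ ->; rewrite !add0r.
Qed.

Lemma all_T w : is_hom w -> Tm w.
Proof.
move=> hw.
have [S [gS Smax]] := @graph_max _ E.
pose X := domG S; pose Y := ranG S.
have hX : is_submod X := dom_sub gS.
have hY : is_submod Y := ran_sub gS.
have iXY : indep X Y := dom_ran gS.
pose N := sumP X Y.
have hN : is_submod N := sub_sum hX hY.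
have hT : is_submod (fun _ : E => True) by split.
have [Z [hZ _ iZN cZ]] := comp_ex hN hT.
have eL : ess (sumP N Z) by move=> z nz; apply: cZ.
have iNZ : indep N Z := indep_sym iZN.
have sqZ : sqfree Z := graph_sqfree gS Smax hZ iZN.
have XN : forall x, X x -> N x by move=> x hx; apply: sum_l.
have YN : forall y, Y y -> N y by move=> y hy; apply: sum_r.
have iXYZ : indep X (sumP Y Z).
  move=> v Xv [y [z [Yy Zz ev]]].
  have z0 : z = 0.
    apply: iZN => //; have -> : z = v - y by rewrite ev addrC addKr.
    by apply: sB => //; [apply: XN | apply: YN].
  by apply: iXY => //; rewrite ev z0 addr0.
have iYXZ : indep Y (sumP X Z).
  move=> v Yv [x [z [Xx Zz ev]]].
  have z0 : z = 0.
    apply: iZN => //; have -> : z = v - x by rewrite ev addrC addKr.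
    by apply: sB => //; [apply: YN | apply: XN].
  by apply: iXY => //; rewrite ev z0 addr0.
have [pX [hpX epX]] := proj_ex Einj hX (sub_sum hY hZ) iXYZ.
have [pY [hpY epY]] := proj_ex Einj hY (sub_sum hX hZ) iYXZ.
have [pZ [hpZ epZ]] := proj_ex Einj hZ hN iZN.
have pXe : forall x y z, X x -> Y y -> Z z -> pX (x + y + z) = x.
  by move=> x y z Xx Yy Zz; rewrite -addrA epX //; exists y, z.
have pYe : forall x y z, X x -> Y y -> Z z -> pY (x + y + z) = y.
  by move=> x y z Xx Yy Zz; rewrite [x + y]addrC -addrA epY //; exists x, z.
have pZe : forall x y z, X x -> Y y -> Z z -> pZ (x + y + z) = z.
  by move=> x y z Xx Yy Zz; rewrite addrC epZ //; exists x, y.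
have X0 := s0 hX; have Y0 := s0 hY; have Z0 := s0 hZ.
have onX : forall x, X x -> [/\ pX x = x, pY x = 0 & pZ x = 0].
  move=> x Xx; have e : x = x + 0 + 0 by rewrite !addr0.
  by rewrite e pXe // pYe // pZe.
have onY : forall y, Y y -> [/\ pX y = 0, pY y = y & pZ y = 0].
  move=> y Yy; have e : y = 0 + y + 0 by rewrite add0r addr0.
  by rewrite e pXe // pYe // pZe.
have pZ_Z : forall z, Z z -> pZ z = z.
  by move=> z Zz; have := pZe 0 0 z X0 Y0 Zz; rewrite !add0r.
have pX_Z : forall z, Z z -> pX z = 0.
  by move=> z Zz; have := pXe 0 0 z X0 Y0 Zz; rewrite !add0r.
have pY_Z : forall z, Z z -> pY z = 0.
  by move=> z Zz; have := pYe 0 0 z X0 Y0 Zz; rewrite !add0r.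
pose f (e0 : E) := xget 0 (fun y => S (e0, y)).
pose g (e0 : E) := xget 0 (fun x => S (x, e0)).
have fS : forall x, X x -> S (x, f x).
  by move=> x [y Sy]; exact: (@xgetPex _ 0 (fun y0 => S (x, y0)) (ex_intro _ y Sy)).
have gS' : forall y, Y y -> S (g y, y).
  by move=> y [x Sx]; exact: (@xgetPex _ 0 (fun x0 => S (x0, y)) (ex_intro _ x Sx)).
have fY : forall x, X x -> Y (f x) by move=> x Xx; exists x; apply: fS.
have gX : forall y, Y y -> X (g y) by move=> y Yy; exists y; apply: gS'.
have fg : forall y, Y y -> f (g y) = y.
  by move=> y Yy; apply: (graph_fun gS (fS _ (gX _ Yy)) (gS' _ Yy)).
have gf : forall x, X x -> g (f x) = x.
  by move=> x Xx; apply: (graph_inj gS (gS' _ (fY _ Xx)) (fS _ Xx)).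
have [gS0 gSD gSZ _ _] := gS.
have [F0 [hF0 eF0]] : exists F0, is_hom F0 /\ forall x, X x -> F0 x = f x.
  apply: ext_on => // a x x' Xx Xx'.
  apply: (graph_fun gS (fS _ _)); first by apply: sD => //; apply: sZ.
  by apply: gSD; [apply: gSZ; apply: fS | apply: fS].
have [G0 [hG0 eG0]] : exists G0, is_hom G0 /\ forall y, Y y -> G0 y = g y.
  apply: ext_on => // a y y' Yy Yy'.
  apply: (graph_inj gS (gS' _ _)); first by apply: sD => //; apply: sZ.
  by apply: gSD; [apply: gSZ; apply: gS' | apply: gS'].
pose Phi := F0 \o pX; pose Psi := G0 \o pY.
have hPhi : is_hom Phi := hom_comp hF0 hpX.
have hPsi : is_hom Psi := hom_comp hG0 hpY.
have agree : forall u v, is_hom u -> is_hom v ->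
    (forall x y z, X x -> Y y -> Z z -> u (x + y + z) = v (x + y + z)) -> eqJ u v.
  move=> u v hu hv h; apply: (ess_agree hu hv eL).
  by move=> _ [_ [z [[x [y [Xx Yy ->]]] Zz ->]]]; apply: h.
have J0f : forall u, is_hom u ->
    (forall x y z, X x -> Y y -> Z z -> u (x + y + z) = 0) -> Jm u.
  move=> u hu h; have := agree u (fun _ => 0) hu (@hom0f _ E) h; rewrite /eqJ.
  by apply: J_ext => x; rewrite subr0.
have TPhi : Tm Phi.
  apply: T_nil => //; apply: J0f; first exact: hom_comp.
  move=> x y z Xx Yy Zz; rewrite /Phi /= (pXe x y z) // (eF0 x Xx).
  by have [-> _ _] := onY _ (fY _ Xx); rewrite (hom0 hF0).
have TPsi : Tm Psi.
  apply: T_nil => //; apply: J0f; first exact: hom_comp.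
  move=> x y z Xx Yy Zz; rewrite /Psi /= (pYe x y z) // (eG0 y Yy).
  by have [_ -> _] := onX _ (gX _ Yy); rewrite (hom0 hG0).
have qid : forall p, is_hom p -> (forall x y z, X x -> Y y -> Z z ->
    p (p (x + y + z)) = p (x + y + z)) -> Tm p.
  move=> p hp h; apply: T_qidem => //.
  apply: (agree (p \o p) p) => //; exact: hom_comp.
have TpX : Tm pX.
  apply: qid => // x y z Xx Yy Zz; rewrite (pXe x y z) //.
  by have [-> _ _] := onX _ Xx.
have TpY : Tm pY.
  apply: qid => // x y z Xx Yy Zz; rewrite (pYe x y z) //.
  by have [_ -> _] := onY _ Yy.
have TpZ : Tm pZ.
  by apply: qid => // x y z Xx Yy Zz; rewrite (pZe x y z) // pZ_Z.
have orth : forall P Q, is_hom P -> is_hom Q ->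
    (forall x y z, X x -> Y y -> Z z -> Q (P (x + y + z)) = 0) ->
    forall s, is_hom s -> Tm (P \o s \o Q).
  move=> P Q hP hQ h s hs; apply: T_offdiag => //.
  by apply: J0f => //; apply: hom_comp.
have oXY := orth pX pY hpX hpY (fun x y z Xx Yy Zz => etrans (congr1 pY (pXe x y z Xx Yy Zz)) (match onX x Xx with And3 _ h _ => h end)).
have oXZ := orth pX pZ hpX hpZ (fun x y z Xx Yy Zz => etrans (congr1 pZ (pXe x y z Xx Yy Zz)) (match onX x Xx with And3 _ _ h => h end)).
have oYX := orth pY pX hpY hpX (fun x y z Xx Yy Zz => etrans (congr1 pX (pYe x y z Xx Yy Zz)) (match onY y Yy with And3 h _ _ => h end)).
have oYZ := orth pY pZ hpY hpZ (fun x y z Xx Yy Zz => etrans (congr1 pZ (pYe x y z Xx Yy Zz)) (match onY y Yy with And3 _ _ h => h end)).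
have oZX := orth pZ pX hpZ hpX (fun x y z Xx Yy Zz => etrans (congr1 pX (pZe x y z Xx Yy Zz)) (pX_Z z Zz)).
have oZY := orth pZ pY hpZ hpY (fun x y z Xx Yy Zz => etrans (congr1 pY (pZe x y z Xx Yy Zz)) (pY_Z z Zz)).
have dX : forall s, is_hom s -> Tm (pX \o s \o pX).
  move=> s hs.
  have h1 := hom_comp (hom_comp hs hpX) hPsi.
  have T2 := T_comp (oXY _ h1) TPhi.
  have hl := hom_comp (hom_comp hpX hs) hpX.
  apply: (T_eqJ T2 hl).
  apply: (agree _ _ hl (hom_comp (hom_comp (hom_comp hpX h1) hpY) hPhi)).
  move=> x y z Xx Yy Zz; rewrite /Phi /Psi /= (pXe x y z) // (eF0 x Xx).
  have [_ e1 _] := onY _ (fY _ Xx); rewrite !e1 (eG0 _ (fY _ Xx)) (gf x Xx).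
  by have [-> _ _] := onX _ Xx.
have dY : forall s, is_hom s -> Tm (pY \o s \o pY).
  move=> s hs.
  have h1 := hom_comp (hom_comp hs hpY) hPhi.
  have T2 := T_comp (oYX _ h1) TPsi.
  have hl := hom_comp (hom_comp hpY hs) hpY.
  apply: (T_eqJ T2 hl).
  apply: (agree _ _ hl (hom_comp (hom_comp (hom_comp hpY h1) hpX) hPsi)).
  move=> x y z Xx Yy Zz; rewrite /Phi /Psi /= (pYe x y z) // (eG0 y Yy).
  have [e1 _ _] := onX _ (gX _ Yy); rewrite !e1 (eF0 _ (gX _ Yy)) (fg y Yy).
  by have [_ -> _] := onY _ Yy.
have dZ : forall s, is_hom s -> Tm (pZ \o s \o pZ).
  move=> s hs; apply: (sqfree_T hN hZ iNZ eL hpZ _ sqZ hs).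
  by move=> n z Nn Zz; rewrite addrC epZ.
pose Sg := fun x => pX x + pY x + pZ x.
have hSg : is_hom Sg by apply: hom_add; [apply: hom_add|].
have idS : eqJ id Sg.
  apply: agree => // x y z Xx Yy Zz; rewrite /Sg pXe // pYe // pZe //.
have col : forall Q, is_hom Q -> Tm (pX \o w \o Q) -> Tm (pY \o w \o Q) ->
    Tm (pZ \o w \o Q) -> Tm (w \o Q).
  move=> Q hQ t1 t2 t3.
  have hwQ : is_hom (w \o Q) by apply: hom_comp.
  apply: (T_eqJ (f := w \o Q) (g := Sg \o (w \o Q))); last first.
    exact: (@eqJ_comp id Sg (w \o Q) (w \o Q) (@hom_id _ E) hSg hwQ hwQ idS (eqJ_refl hwQ)).
  - by [].
  apply: T_ext (T_add (T_add t1 t2) t3) => x.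
  by [].
have cX : Tm (w \o pX) by apply: col => //; [apply: dX | apply: oYX | apply: oZX].
have cY : Tm (w \o pY) by apply: col => //; [apply: oXY | apply: dY | apply: oZY].
have cZ' : Tm (w \o pZ) by apply: col => //; [apply: oXZ | apply: oYZ | apply: dZ].
apply: (T_eqJ (T_add (T_add cX cY) cZ') hw).
apply: agree => //; first by apply: hom_add; [apply: hom_add|]; apply: hom_comp.
move=> x y z Xx Yy Zz /=; rewrite pXe // pYe // pZe //.
by rewrite !(homD _ _ hw).
Qed.
End TT.

Section HomG.
Variables (R : pzRingType) (M N : lmodType R) (f : M -> N) (hf : is_hom f).
Lemma homg0 : f 0 = 0.
Proof.
have h := hf 1 0 0; rewrite !scale1r addr0 in h.
by apply: (addrI (f 0)); rewrite addr0 -h.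
Qed.
Lemma homgD x y : f (x + y) = f x + f y.
Proof. by have := hf 1 x y; rewrite !scale1r. Qed.
Lemma homgZ a x : f (a *: x) = a *: f x.
Proof. by have := hf a x 0; rewrite addr0 homg0 addr0. Qed.
End HomG.

Section Top.
Variables (F : fieldType) (A : algType F).

Lemma convE (x y : A^c) : x * y = ((y : A) * (x : A) : A).
Proof. by []. Qed.

Lemma alg_central (lam : F) (r : A^c) : ((lam%:A : A) : A^c) * r = r * ((lam%:A : A) : A^c).
Proof. by rewrite !convE mulr_algl mulr_algr. Qed.

Lemma alg_mul (l1 l2 : F) : ((l1%:A : A) : A^c) * ((l2%:A : A) : A^c) = ((l1 * l2)%:A : A).
Proof. by rewrite convE mulr_algr scalerA mulrC. Qed.
End Top.

Unset Implicit Arguments.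
Theorem corollary7 (F : fieldType) (A : algType F) :
  (exists a b c : F, [/\ a != b, a != c & b != c]) ->
  automorphism_invariant (regular_right_module A) ->
  injective_module (regular_right_module A).
Proof.
move=> [a [b [c [ab ac bc]]]] [E [i [[Einj [hi ii ei]] inv]]].
pose lam := (a - c) / (b - c).
have bc0 : b - c != 0 by rewrite subr_eq0.
have lam0 : lam != 0 by rewrite mulf_neq0 ?invr_eq0 // subr_eq0.
have lam1 : 1 - lam != 0.
  rewrite subr_eq0; apply: contraNneq ab => h.
  have : (a - c) = (b - c) by rewrite -[b - c]mul1r h /lam mulfVK.
  by move/eqP; rewrite (can_eq (subrK c)) => /eqP ->.
pose lc : A^c := (lam%:A : A).
pose ld : A^c := (lam^-1%:A : A).
pose le : A^c := ((1 - lam)^-1%:A : A).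
have cc : forall r : A^c, lc * r = r * lc by apply: alg_central.
have dc : forall r : A^c, ld * r = r * ld by apply: alg_central.
have ec : forall r : A^c, le * r = r * le by apply: alg_central.
have cd : lc * ld = 1 by rewrite /lc /ld alg_mul divff // scale1r.
have ce : (1 - lc) * le = 1.
  have -> : (1 - lc) = (((1 - lam)%:A : A) : A^c) by rewrite /lc scalerBl scale1r.
  by rewrite /le alg_mul divff // scale1r.
pose M := fun v : E => exists y, v = i y.
have sM : is_submod M.
  split; first by exists 0; rewrite (homg0 hi).
  - by move=> _ _ [x ->] [y ->]; exists (x + y); rewrite (homgD hi).
  - by move=> k _ [x ->]; exists (k *: x); rewrite (homgZ hi).
have Minv : forall s, is_hom s -> bijective s -> forall m, M m -> M (s m).
  move=> s hs bs _ [x ->]; have [y e] := inv s (conj hs bs) x.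
  by exists y.
have allT := all_T Einj sM Minv cc dc ec cd ce.
have allM : forall e : E, M e.
  move=> e.
  have [||| w [hw ew]] := @Einj (regular_right_module A) E i (fun r => r *: e) => //.
    by move=> k x y; rewrite scalerDl scalerA.
  have [_ Tw] := allT w hw.
  have := Tw (i 1) (ex_intro _ 1 erefl).
  by rewrite ew scale1r.
move=> M' N' i' f' hi' ii' hf'.
have [||| g' [hg' eg']] := @Einj M' N' i' (i \o f') => //.
  by move=> k x y /=; rewrite hf' (homgD hi) (homgZ hi).
pose g n := proj1_sig (cid (allM (g' n))).
have eg : forall n, g' n = i (g n) by move=> n; exact: (proj2_sig (cid (allM (g' n)))).
exists g; split.
- move=> k x y; apply: ii; rewrite -eg hg' !eg.
  by rewrite -(homgZ hi) -(homgD hi).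
- by move=> x; apply: ii; rewrite -eg eg'.
Qed.
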